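(* Let $s\ge 1$, $q=4^{2s}$, and let $\theta$ be the automorphism of $F_q$ given by $\theta(a)=a^{4^s}$. Let $n$ be an even positive integer and suppose $x^n-1=h(x)g(x)$ in $F_q[x;\theta]$, where the degree of $g(x)$ is even. If $g(x)$ is a palindromic polynomial, then $h(x)$ is a palindromic polynomial.
   Context: $F_q[x;\theta]$ is the skew polynomial ring: polynomials $\sum a_ix^i$ with $a_i\in F_q$, usual addition, and multiplication determined by $xa=\theta(a)x$ for $a\in F_q$. A polynomial $f(x)=a_0+a_1x+\dots+a_tx^t$ of degree $t$ is palindromic if $a_i=a_{t-i}$ for all $i\in\{0,\ldots,t\}$. *)

(* Defs.v *)
From HB Require Import structures.
From mathcomp Require Import all_boot all_order all_algebra all_field.
Set Implicit Arguments. Unset Strict Implicit. Unset Printing Implicit Defensive.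
Import GRing.Theory.
Local Open Scope ring_scope.

(* Skew polynomials F[x; theta] are represented by their coefficient
   polynomial in {poly F}; addition is the usual one, and multiplication
   is the skew product determined by x a = theta(a) x, i.e.
   (sum a_i x^i)(sum b_j x^j) = sum_{i,j} a_i theta^i(b_j) x^(i+j). *)
Definition skew_mul (F : ringType) (theta : F -> F) (p q : {poly F}) : {poly F} :=
  \sum_(i < size p) \sum_(j < size q) (p`_i * iter i theta q`_j) *: 'X^(i + j).

Definition palindromic (F : ringType) (p : {poly F}) : Prop :=
  forall i : nat, (i <= (size p).-1)%N -> p`_i = p`_((size p).-1 - i).

Definition frob4 (F : ringType) (s : nat) (a : F) : F := a ^+ (4 ^ s).

(* Main.v *)
Require Import Defs.
From HB Require Import structures.
From mathcomp Require Import all_boot all_order all_algebra all_field zify.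
Import GRing.Theory.
Local Open Scope ring_scope.

Lemma iter_theta0 (F : ringType) (theta : F -> F) i :
  theta 0 = 0 -> iter i theta 0 = 0.
Proof. by move=> t0; elim: i => //= i ->. Qed.

Lemma iter_par (F : ringType) (theta : F -> F) i x :
  (forall y, theta (theta y) = y) -> iter i theta x = if odd i then theta x else x.
Proof.
move=> inv; elim: i => //= i ->; by case: (odd i) => //=.
Qed.

Lemma coef_skew_gen (F : ringType) (theta : F -> F) (p q : {poly F}) N M k :
  theta 0 = 0 -> (size p <= N)%N -> (size q <= M)%N ->
  (skew_mul theta p q)`_k =
  \sum_(i < N) \sum_(j < M) (p`_i * iter i theta q`_j) * ((i + j)%N == k)%:R.
Proof.
move=> t0 hp hq; rewrite /skew_mul coef_sum.
have wid : forall n1 n2 (G : nat -> F), (n1 <= n2)%N ->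
   (forall i, (n1 <= i)%N -> G i = 0) -> \sum_(i < n2) G i = \sum_(i < n1) G i.
  move=> n1 n2 G hn hG; rewrite (big_ord_widen _ G hn) [RHS]big_mkcond /=.
  by apply: eq_bigr => i _; case: ifP => // /negbT; rewrite -leqNgt => /hG.
rewrite (wid _ _ (fun i => \sum_(j < M) p`_i * iter i theta q`_j * ((i + j)%N == k)%:R) hp); last first.
  by move=> i hi; rewrite big1 // => j _; rewrite nth_default ?mul0r.
apply: eq_bigr => i _; rewrite coef_sum.
rewrite (wid _ _ (fun j => p`_i * iter i theta q`_j * ((i + j)%N == k)%:R) hq); last first.
  by move=> j hj; rewrite (nth_default 0 hj) iter_theta0 // mulr0 mul0r.
by apply: (@eq_bigr F 0 +%R) => j _; rewrite coefZ coefXn eq_sym.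
Qed.

Arguments coef_skew_gen {F theta p q N M} k.

Lemma skew_vanish (F : ringType) (theta : F -> F) (p q : {poly F}) N M k :
  theta 0 = 0 -> (size p <= N)%N -> (size q <= M)%N -> (N + M <= k.+1)%N ->
  (skew_mul theta p q)`_k = 0.
Proof.
move=> t0 hp hq hk; rewrite (coef_skew_gen _ t0 hp hq).
apply: big1 => i _; apply: big1 => j _.
have -> : ((i + j)%N == k) = false by apply/negbTE; have := ltn_ord i; have := ltn_ord j; lia.
by rewrite mulr0.
Qed.
Arguments skew_vanish {F theta p q N M} k.

Lemma skew_top (F : ringType) (theta : F -> F) (p q : {poly F}) :
  theta 0 = 0 -> p != 0 -> q != 0 ->
  (skew_mul theta p q)`_((size p).-1 + (size q).-1) =
  lead_coef p * iter (size p).-1 theta (lead_coef q).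
Proof.
move=> t0 p0 q0.
have sp : size p = (size p).-1.+1 by rewrite prednK // size_poly_gt0.
have sq : size q = (size q).-1.+1 by rewrite prednK // size_poly_gt0.
rewrite (coef_skew_gen _ t0 (leqnn _) (leqnn _)).
move: sp sq; rewrite /lead_coef.
set a := (size p).-1; set b := (size q).-1 => sp sq.
rewrite sp sq big_ord_recr /= big1 ?add0r; last first.
  move=> i _; apply: big1 => j _.
  have -> : ((i + j)%N == (a + b)%N) = false by apply/negbTE; have := ltn_ord i; have := ltn_ord j; lia.
  by rewrite mulr0.
rewrite big_ord_recr /= big1 ?add0r ?eqxx ?mulr1 //.
move=> j _; have -> : ((a + j)%N == (a + b)%N) = false by apply/negbTE; have := ltn_ord j; lia.
by rewrite mulr0.
Qed.
Arguments skew_top {F theta p q}.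

Lemma skew_subl (F : ringType) (theta : F -> F) (p r q : {poly F}) N k :
  theta 0 = 0 -> (size p <= N)%N -> (size r <= N)%N ->
  (skew_mul theta (p - r) q)`_k = (skew_mul theta p q)`_k - (skew_mul theta r q)`_k.
Proof.
move=> t0 hp hr.
have hpr : (size (p - r)%R <= N)%N by rewrite (leq_trans (size_add _ _)) // size_opp geq_max hp hr.
rewrite (coef_skew_gen _ t0 hpr (leqnn _)) (coef_skew_gen _ t0 hp (leqnn _)) (coef_skew_gen _ t0 hr (leqnn _)).
rewrite -sumrB; apply: (@eq_bigr F 0 +%R) => i _.
rewrite -sumrB; apply: (@eq_bigr F 0 +%R) => j _.
by rewrite coefB !mulrBl.
Qed.
Arguments skew_subl {F theta p r q N} k.

Lemma skew_rev (F : ringType) (theta : F -> F) (p q : {poly F}) a b k :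
  theta 0 = 0 -> (forall y, theta (theta y) = y) -> ~~ odd a ->
  (size p <= a.+1)%N -> size q = b.+1 -> palindromic q -> (k <= a + b)%N ->
  (skew_mul theta p q)`_(a + b - k) =
  (skew_mul theta (\poly_(i < a.+1) p`_(a - i)) q)`_k.
Proof.
move=> t0 inv ea hp hq pq hk.
rewrite (coef_skew_gen _ t0 hp (eq_leq hq)).
rewrite (coef_skew_gen _ t0 (size_poly _ _) (eq_leq hq)).
rewrite (reindex_inj rev_ord_inj) /=.
apply: (@eq_bigr F 0 +%R) => i _.
rewrite (reindex_inj rev_ord_inj) /=.
apply: (@eq_bigr F 0 +%R) => j _.
have hi := ltn_ord i; have hj := ltn_ord j.
rewrite coef_poly hi !subSS.
rewrite !(iter_par _ _ _ _ inv) oddB; last by lia.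
rewrite (negbTE ea) /=.
have -> : q`_(b - j) = q`_j.
  by rewrite (pq j) hq //= ?subKn //; lia.
have -> : ((a - i + (b - j))%N == (a + b - k)%N) = ((i + j)%N == k).
  by apply/eqP/eqP; lia.
done.
Qed.
Arguments skew_rev {F theta p q a b k}.

Theorem corollary1 (s : nat) (F : finFieldType) (n : nat) (h g : {poly F}) :
  (1 <= s)%N ->
  #|F| = (4 ^ (2 * s))%N ->
  (0 < n)%N -> ~~ odd n ->
  'X^n - 1 = skew_mul (frob4 (F := F) s) h g ->
  ~~ odd (size g).-1 ->
  palindromic g -> palindromic h.
Proof.
move=> s1 hcard n0 en hP eb pg.
set th := frob4 (F:=F) s.
have t0 : th 0 = 0 by rewrite /th /frob4 expr0n expn_eq0.
have inv : forall y, th (th y) = y.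
  move=> y; rewrite /th /frob4 -exprM -expnD addnn -mul2n -hcard.
  exact: expf_card.
have ch2 : (2 \in [pchar F])%N.
  apply: (@card_finPcharP _ 2 (4 * s)) => //.
  by rewrite hcard (_ : 4 = 2 ^ 2)%N // -!expnM mulnA.
have m1 : forall x : F, - x = x.
  move=> x; apply/eqP; rewrite eq_sym -subr_eq0 opprK -mulr2n -mulr_natr.
  by rewrite (pcharf0 ch2) mulr0.
set P : {poly F} := 'X^n - 1.
have cP : forall k, P`_k = (k == n)%:R + (k == 0%N)%:R.
  by move=> k; rewrite /P coefB coefXn coef1 m1.
have Pn : P`_n != 0 by rewrite cP eqxx (_ : (n == 0%N) = false) ?addr0 ?oner_neq0 //; lia.
have h0 : h != 0.
  apply/eqP => h0; move: Pn; rewrite /P hP h0 /skew_mul size_poly0 big_ord0 coef0 eqxx //.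
have g0 : g != 0.
  apply/eqP => g0; move: Pn; rewrite /P hP g0 /skew_mul size_poly0 big1 ?coef0 ?eqxx //.
  by move=> i _; rewrite big_ord0.
set a := (size h).-1; set b := (size g).-1.
have sh : size h = a.+1 by rewrite prednK // size_poly_gt0.
have sg : size g = b.+1 by rewrite prednK // size_poly_gt0.
have thnz : forall x, x != 0 -> iter a th x != 0.
  move=> x x0; rewrite iter_par //; case: ifP => // _.
  by apply: contra x0 => /eqP e; rewrite -(inv x) e t0.
have top := skew_top t0 h0 g0.
have Pab : P`_(a + b) != 0.
  by rewrite /P hP top mulf_neq0 // ?lead_coef_eq0 // thnz // lead_coef_eq0.
have nab : n = (a + b)%N.
  apply/eqP; rewrite eqn_leq; apply/andP; split.
    apply: contraR Pn; rewrite -ltnNge => hlt; apply/eqP.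
    by rewrite /P hP (skew_vanish _ t0 (eq_leq sh) (eq_leq sg)) //; lia.
  apply: contraR Pab; rewrite -ltnNge => hlt; apply/eqP.
  rewrite cP; have -> : ((a + b)%N == n) = false by lia.
  have -> : ((a + b)%N == 0%N) = false by lia.
  by rewrite addr0.
have ea : ~~ odd a.
  by move: en; rewrite nab oddD (negbTE eb) addbF.
pose R := \poly_(i < a.+1) h`_(a - i).
have eqR : forall k, (skew_mul th h g)`_k = (skew_mul th R g)`_k.
  move=> k; case: (leqP k (a + b)) => hk.
    rewrite -(skew_rev t0 inv ea (eq_leq sh) sg pg hk) -hP -/P -nab.
    rewrite !cP; have -> : ((n - k)%N == n) = (k == 0%N) by apply/eqP/eqP; lia.
    have -> : ((n - k)%N == 0%N) = (k == n) by apply/eqP/eqP; lia.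
    by rewrite addrC.
  rewrite (skew_vanish _ t0 (eq_leq sh) (eq_leq sg)); last by lia.
  rewrite (skew_vanish _ t0 (size_poly _ _) (eq_leq sg)) //; lia.
have D0 : h - R = 0.
  apply/eqP; apply: contraT => D0.
  have := skew_top t0 D0 g0.
  rewrite (skew_subl _ t0 (eq_leq sh) (size_poly _ _)) eqR subrr => /esym/eqP.
  rewrite mulf_eq0 lead_coef_eq0 (negbTE D0) /=.
  rewrite iter_par //; case: ifP => _; last by rewrite lead_coef_eq0 (negbTE g0).
  move=> /eqP e; move: g0; rewrite -lead_coef_eq0 -(inv (lead_coef g)) e t0 eqxx //.
have hR := subr0_eq D0.
move=> i; rewrite -/a => hi.
by rewrite {1}hR /R coef_poly ltnS hi.
Qed.
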